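(* In the Setting below and under the Standing Assumption, let $x\in\mathbb{Q}\cap D$ be such that the Lyapunov exponent $\lambda(x)$ exists. Then $$\frac{1}{\ln 2}\max(0,\lambda(x))\le\liminf_{p\to\infty}\sigma(x,p)\le\limsup_{p\to\infty}\sigma(x,p)\le\frac{1}{\ln 2}\max(0,\bar\lambda(x));$$ in particular, whenever the loss of significance rate $\sigma(x)=\lim_{p\to\infty}\sigma(x,p)$ exists, it lies between these bounds, and if $\bar\lambda(x)=\lambda(x)$ then $\sigma(x)$ exists and equals $\frac{1}{\ln 2}\max(0,\lambda(x))$.
   Context: Setting. $D\subseteq\mathbb{R}$ is a compact interval and $f:D\to D$ is twice continuously differentiable on $D$ with $f''$ bounded. For $x\in D$ the orbit is $x_0=x$, $x_{n+1}=f(x_n)$. A floating-point number of precision $m$ is a real $s\cdot 2^{e-m}$ with $s,e\in\mathbb{Z}$, $|s|\le 2^m-1$; $rd_m(y)$ denotes rounding of $y$ to a nearest floating-point number of precision $m$. Let $L(a,e):=\sup\{|f'(y)|: y\in[a-e,a+e]\cap D\}$ and fix a function $\bar L$ with $L(a,e)\le\bar L(a,e)\le\min(\bar L_{max},\,L(a,e)+Ke)$ for constants $\bar L_{max},K\ge0$. For $x\in\mathbb{Q}\cap D$ and precision $m\ge1$ the computed sequence is $\hat x_0=rd_m(x)$, $\bar e_0=2^{-m}|\hat x_0|$, $\hat x_{n+1}=rd_m(f(\hat x_n))$, $\bar e_{n+1}=\bar L(\hat x_n,\bar e_n)\bar e_n+2^{-m}|\hat x_{n+1}|$ (all $\hat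 x_n$ assumed in $D$). For $N\in\mathbb{N}$, $p\in\mathbb{Z}$, $m_{min}(x,N,p)$ is the least $m\ge1$ such that the sequence computed at precision $m$ satisfies $\bar e_n\le\frac{10^{-p}}{1+10^{-p}}|\hat x_n|$ for all $n=0,\dots,N$. $\sigma(x,p):=\limsup_{N\to\infty} m_{min}(x,N,p)/N$, and the loss of significance rate is $\sigma(x):=\lim_{p\to\infty}\sigma(x,p)$. Standing Assumption: $x_n\ne0$ for all $n$ and $\lim_{N\to\infty}\mathrm{ld}(\min\{|x_n|:0\le n\le N\})/N=0$, $\mathrm{ld}=\log_2$. Lyapunov exponent: $\lambda(x):=\lim_{n\to\infty}\frac1n\sum_{k=0}^{n-1}\ln|f'(f^k(x))|$ when it exists. For $\alpha>0$, $\eta_\alpha(y)=\ln y$ if $y\ge\alpha$, $\eta_\alpha(y)=\ln\alpha$ if $0\le y<\alpha$; $\bar\lambda_\alpha(x):=\limsup_{n\to\infty}\frac1n\sum_{k=0}^{n-1}\eta_\alpha(|f'(f^k(x))|)$ and $\bar\lambda(x):=\lim_{\alpha\to0^+}\bar\lambda_\alpha(x)$. *)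

(* Defs.v *)
From Stdlib Require Import Reals Lra Lia ZArith QArith Qreals ClassicalEpsilon.
Open Scope R_scope.

Inductive Rbar : Type := Finite (r : R) | p_infty | m_infty.

Definition Rbar_le (x y : Rbar) : Prop :=
  match x, y with
  | m_infty, _ => True
  | _, p_infty => True
  | p_infty, _ => False
  | _, m_infty => False
  | Finite a, Finite b => a <= b
  end.

Definition Rbar_is_lub (E : Rbar -> Prop) (l : Rbar) : Prop :=
  (forall z, E z -> Rbar_le z l) /\
  (forall u, (forall z, E z -> Rbar_le z u) -> Rbar_le l u).
Definition Rbar_is_glb (E : Rbar -> Prop) (l : Rbar) : Prop :=
  (forall z, E z -> Rbar_le l z) /\
  (forall u, (forall z, E z -> Rbar_le u z) -> Rbar_le u l).

(* supremum / infimum in the extended reals (they always exist) *)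
Definition Rbar_lub (E : Rbar -> Prop) : Rbar :=
  epsilon (inhabits p_infty) (Rbar_is_lub E).
Definition Rbar_glb (E : Rbar -> Prop) : Rbar :=
  epsilon (inhabits p_infty) (Rbar_is_glb E).

Definition Rbar_limsup (u : nat -> Rbar) : Rbar :=
  Rbar_glb (fun y => exists N : nat,
    y = Rbar_lub (fun z => exists n : nat, (N <= n)%nat /\ z = u n)).
Definition Rbar_liminf (u : nat -> Rbar) : Rbar :=
  Rbar_lub (fun y => exists N : nat,
    y = Rbar_glb (fun z => exists n : nat, (N <= n)%nat /\ z = u n)).

Definition Rbar_cv (u : nat -> Rbar) (l : Rbar) : Prop :=
  match l with
  | Finite a => forall eps, 0 < eps -> exists P : nat, forall p, (P <= p)%nat ->
                  exists r, u p = Finite r /\ Rabs (r - a) < eps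
  | p_infty => forall M, exists P : nat, forall p, (P <= p)%nat -> Rbar_le (Finite M) (u p)
  | m_infty => forall M, exists P : nat, forall p, (P <= p)%nat -> Rbar_le (u p) (Finite M)
  end.

Definition Rbar_lim_0plus (g : R -> Rbar) (l : R) : Prop :=
  forall eps, 0 < eps -> exists delta, 0 < delta /\
    forall alpha, 0 < alpha < delta ->
      exists r, g alpha = Finite r /\ Rabs (r - l) < eps.

Definition inD (a b y : R) : Prop := a <= y <= b.

Fixpoint orbit (f : R -> R) (x : R) (n : nat) : R :=
  match n with O => x | S k => f (orbit f x k) end.

Fixpoint orbit_min_abs (f : R -> R) (x : R) (N : nat) : R :=
  match N with
  | O => Rabs x
  | S k => Rmin (orbit_min_abs f x k) (Rabs (orbit f x (S k)))
  end.

Definition ld (y : R) : R := ln y / ln 2.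

Fixpoint psum (g : nat -> R) (n : nat) : R :=
  match n with O => 0 | S k => psum g k + g k end.

Definition lyap_avg (f f' : R -> R) (x : R) (n : nat) : R :=
  psum (fun k => ln (Rabs (f' (orbit f x k)))) n / INR n.

Definition eta (alpha y : R) : R :=
  if Rle_dec alpha y then ln y else ln alpha.

Definition lyap_bar_alpha (f f' : R -> R) (x alpha : R) : Rbar :=
  Rbar_limsup (fun n =>
    Finite (psum (fun k => eta alpha (Rabs (f' (orbit f x k)))) n / INR n)).

Definition is_fp (m : nat) (y : R) : Prop :=
  exists s e : Z, (Z.abs s <= 2 ^ (Z.of_nat m) - 1)%Z /\
    y = IZR s * powerRZ 2 (e - Z.of_nat m).

Definition is_round_nearest (rd : nat -> R -> R) : Prop :=
  forall m y, is_fp m (rd m y) /\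
    forall z, is_fp m z -> Rabs (y - rd m y) <= Rabs (y - z).

Fixpoint computed (f : R -> R) (Lbar : R -> R -> R) (rd : nat -> R -> R)
    (m : nat) (x : R) (n : nat) : R * R :=
  match n with
  | O => let xh := rd m x in (xh, / 2 ^ m * Rabs xh)
  | S k => let (xh, e) := computed f Lbar rd m x k in
           let xh' := rd m (f xh) in
           (xh', Lbar xh e * e + / 2 ^ m * Rabs xh')
  end.

Definition xhat f Lbar rd m x n := fst (computed f Lbar rd m x n).
Definition ebar f Lbar rd m x n := snd (computed f Lbar rd m x n).

Definition prec_ok f Lbar rd (x : R) (m N : nat) (p : Z) : Prop :=
  forall n, (n <= N)%nat ->
    ebar f Lbar rd m x n <=
      powerRZ 10 (- p) / (1 + powerRZ 10 (- p)) * Rabs (xhat f Lbar rd m x n).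

Definition is_mmin f Lbar rd x (N : nat) (p : Z) (m : nat) : Prop :=
  (1 <= m)%nat /\ prec_ok f Lbar rd x m N p /\
  forall k, (1 <= k < m)%nat -> ~ prec_ok f Lbar rd x k N p.

Definition mmin_ratio f Lbar rd x (N : nat) (p : Z) : Rbar :=
  match excluded_middle_informative (exists m, is_mmin f Lbar rd x N p m) with
  | left _ => Finite (INR (epsilon (inhabits 0%nat) (is_mmin f Lbar rd x N p)) / INR N)
  | right _ => p_infty
  end.

Definition sigma_rate f Lbar rd x (p : Z) : Rbar :=
  Rbar_limsup (fun N => mmin_ratio f Lbar rd x N p).

(* set {|f'(y)| : y in [c-e,c+e] /\ D} whose sup is L(c,e) *)
Definition L_set (a b : R) (f' : R -> R) (c e : R) : R -> Prop :=
  fun z => exists y, inD a b y /\ Rabs (y - c) <= e /\ z = Rabs (f' y).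

(* Main.v *)
Require Import Defs.
From Stdlib Require Import Reals QArith Qreals ZArith.
From Stdlib Require Import Lra Lia Classical ClassicalEpsilon FunctionalExtensionality.
Open Scope R_scope.


Lemma Rbar_le_trans x y z : Rbar_le x y -> Rbar_le y z -> Rbar_le x z.
Proof. destruct x, y, z; simpl; intros; try tauto; lra. Qed.

Lemma Rbar_le_antisym x y : Rbar_le x y -> Rbar_le y x -> x = y.
Proof. destruct x, y; simpl; intros; try tauto; try f_equal; try lra. Qed.

Lemma Rbar_le_refl x : Rbar_le x x.
Proof. destruct x; simpl; auto; lra. Qed.

Lemma Rbar_lub_ex (E : Rbar -> Prop) : exists l, Rbar_is_lub E l.
Proof.
  destruct (classic (E p_infty)) as [Hp|Hp].
  { exists p_infty; split.
    - intros z _; destruct z; simpl; auto.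
    - intros u Hu; apply Hu; auto. }
  set (F := fun r => E (Finite r)).
  destruct (classic (exists r, F r)) as [Hne|Hne].
  - destruct (classic (bound F)) as [Hb|Hb].
    + destruct (completeness F Hb Hne) as [s [Hs1 Hs2]].
      exists (Finite s); split.
      * intros z Hz; destruct z; simpl; [apply Hs1; exact Hz|contradiction|auto].
      * intros u Hu; destruct u; simpl; auto.
        -- apply Hs2; intros r0 Hr; specialize (Hu _ Hr); exact Hu.
        -- destruct Hne as [r0 Hr]; specialize (Hu _ Hr); simpl in Hu; auto.
    + exists p_infty; split.
      * intros z _; destruct z; simpl; auto.
      * intros u Hu; destruct u; simpl; auto.
        -- apply Hb; exists r; intros t Ht; specialize (Hu _ Ht); exact Hu.
        -- destruct Hne as [r0 Hr]; specialize (Hu _ Hr); simpl in Hu; auto.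
  - exists m_infty; split.
    + intros z Hz; destruct z; simpl; [apply Hne; exists r; exact Hz|contradiction|auto].
    + intros u _; destruct u; simpl; auto.
Qed.

Lemma Rbar_lub_spec E : Rbar_is_lub E (Rbar_lub E).
Proof.
  unfold Rbar_lub. apply epsilon_spec. apply Rbar_lub_ex.
Qed.

Lemma Rbar_glb_ex (E : Rbar -> Prop) : exists l, Rbar_is_glb E l.
Proof.
  destruct (Rbar_lub_ex (fun u => forall z, E z -> Rbar_le u z)) as [l [H1 H2]].
  exists l; split.
  - intros z Hz. apply H2. intros u Hu. apply Hu; auto.
  - intros u Hu. apply H1. auto.
Qed.

Lemma Rbar_glb_spec E : Rbar_is_glb E (Rbar_glb E).
Proof.
  unfold Rbar_glb. apply epsilon_spec. apply Rbar_glb_ex.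
Qed.

Lemma Rbar_le_eps (w : Rbar) (A : R) :
  (forall eps, 0 < eps -> Rbar_le w (Finite (A + eps))) -> Rbar_le w (Finite A).
Proof.
  intros H. destruct w; simpl; auto.
  - apply Rnot_lt_le; intro Hlt.
    specialize (H ((r - A)/2) ltac:(lra)); simpl in H; lra.
  - apply (H 1); lra.
Qed.

Lemma Rbar_ge_eps (w : Rbar) (A : R) :
  (forall eps, 0 < eps -> Rbar_le (Finite (A - eps)) w) -> Rbar_le (Finite A) w.
Proof.
  intros H. destruct w; simpl; auto.
  - apply Rnot_lt_le; intro Hlt.
    specialize (H ((A - r)/2) ltac:(lra)); simpl in H; lra.
  - apply (H 1); lra.
Qed.

Definition cvF (u : nat -> Rbar) (A : R) := forall eps, 0 < eps -> exists P : nat,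
  forall p, (P <= p)%nat -> exists r, u p = Finite r /\ Rabs (r - A) < eps.

Lemma limsup_cv u A : cvF u A -> Rbar_limsup u = Finite A.
Proof.
  intros Hc. unfold Rbar_limsup.
  set (Y := fun y => exists N : nat,
    y = Rbar_lub (fun z => exists n : nat, (N <= n)%nat /\ z = u n)).
  assert (HA : Rbar_is_glb Y (Finite A)).
  { split.
    - intros z [N ->].
      apply Rbar_ge_eps; intros eps He.
      destruct (Hc eps He) as [P HP].
      destruct (HP (max N P) ltac:(lia)) as [r [Hr1 Hr2]].
      destruct (Rbar_lub_spec (fun z => exists n : nat, (N <= n)%nat /\ z = u n)) as [H1 _].
      eapply Rbar_le_trans; [|apply H1; exists (max N P); split; [lia|reflexivity]].
      rewrite Hr1; simpl. apply Rabs_def2 in Hr2; lra.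
    - intros w Hw. apply Rbar_le_eps; intros eps He.
      destruct (Hc eps He) as [P HP].
      eapply Rbar_le_trans; [apply Hw; exists P; reflexivity|].
      destruct (Rbar_lub_spec (fun z => exists n : nat, (P <= n)%nat /\ z = u n)) as [_ H2].
      apply H2. intros z [n [Hn ->]].
      destruct (HP n Hn) as [r [Hr1 Hr2]]. rewrite Hr1; simpl.
      apply Rabs_def2 in Hr2; lra. }
  apply Rbar_le_antisym.
  - apply (proj2 HA). apply Rbar_glb_spec.
  - apply (proj2 (Rbar_glb_spec Y)). apply HA.
Qed.

Lemma liminf_cv u A : cvF u A -> Rbar_liminf u = Finite A.
Proof.
  intros Hc. unfold Rbar_liminf.
  set (Y := fun y => exists N : nat,
    y = Rbar_glb (fun z => exists n : nat, (N <= n)%nat /\ z = u n)).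
  assert (HA : Rbar_is_lub Y (Finite A)).
  { split.
    - intros z [N ->].
      apply Rbar_le_eps; intros eps He.
      destruct (Hc eps He) as [P HP].
      destruct (HP (max N P) ltac:(lia)) as [r [Hr1 Hr2]].
      destruct (Rbar_glb_spec (fun z => exists n : nat, (N <= n)%nat /\ z = u n)) as [H1 _].
      eapply Rbar_le_trans; [apply H1; exists (max N P); split; [lia|reflexivity]|].
      rewrite Hr1; simpl. apply Rabs_def2 in Hr2; lra.
    - intros w Hw. apply Rbar_ge_eps; intros eps He.
      destruct (Hc eps He) as [P HP].
      eapply Rbar_le_trans; [|apply Hw; exists P; reflexivity].
      destruct (Rbar_glb_spec (fun z => exists n : nat, (P <= n)%nat /\ z = u n)) as [_ H2].
      apply H2. intros z [n [Hn ->]].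
      destruct (HP n Hn) as [r [Hr1 Hr2]]. rewrite Hr1; simpl.
      apply Rabs_def2 in Hr2; lra. }
  apply Rbar_le_antisym.
  - apply (proj2 (Rbar_lub_spec Y)). apply HA.
  - apply (proj2 HA). apply Rbar_lub_spec.
Qed.

Record Hyp (a b : R) (f f' f'' : R -> R) (Lbar : R -> R -> R) (M K : R)
   (rd : nat -> R -> R) (x : R) : Prop := {
  h_ab : a < b;
  h_fD : forall y, inD a b y -> inD a b (f y);
  h_f' : forall y, inD a b y -> derivable_pt_lim f y (f' y);
  h_f'' : forall y, inD a b y -> derivable_pt_lim f' y (f'' y);
  h_M : forall y, inD a b y -> Rabs (f'' y) <= M;
  h_K : 0 <= K;
  h_Lbar : forall c e l, inD a b c -> 0 <= e -> is_lub (L_set a b f' c e) l ->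
     l <= Lbar c e /\ Lbar c e <= l + K * e;
  h_rd : is_round_nearest rd;
  h_x : inD a b x;
  h_xh : forall m n, (1 <= m)%nat -> inD a b (xhat f Lbar rd m x n);
  h_nz : forall n, orbit f x n <> 0;
  h_f'nz : forall k, f' (orbit f x k) <> 0
}.


Lemma M_nonneg a b f f' f'' Lbar M K rd x : Hyp a b f f' f'' Lbar M K rd x -> 0 <= M.
Proof.
  intros H. assert (Ha : inD a b a) by (pose proof (h_ab _ _ _ _ _ _ _ _ _ _ H); unfold inD; lra).
  pose proof (h_M _ _ _ _ _ _ _ _ _ _ H a Ha). pose proof (Rabs_pos (f'' a)); lra.
Qed.

Lemma orbit_D a b f f' f'' Lbar M K rd x : Hyp a b f f' f'' Lbar M K rd x ->
  forall n, inD a b (orbit f x n).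
Proof.
  intros H n; induction n; simpl. apply (h_x _ _ _ _ _ _ _ _ _ _ H).
  apply (h_fD _ _ _ _ _ _ _ _ _ _ H); auto.
Qed.

Lemma inD_abs a b y : inD a b y -> Rabs y <= Rmax (Rabs a) (Rabs b).
Proof.
  unfold inD; intros [H1 H2].
  unfold Rmax, Rabs; repeat destruct Rcase_abs; destruct Rle_dec; lra.
Qed.

Lemma Lip_f' a b f f' f'' Lbar M K rd x : Hyp a b f f' f'' Lbar M K rd x ->
  forall y z, inD a b y -> inD a b z -> Rabs (f' y - f' z) <= M * Rabs (y - z).
Proof.
  intros H y z Hy Hz.
  destruct (MVT_abs f' f'' z y) as [c [Hc1 Hc2]].
  { intros c Hc. apply (h_f'' _ _ _ _ _ _ _ _ _ _ H).
    unfold inD in *. destruct Hy, Hz.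
    split; [apply Rle_trans with (Rmin z y); [apply Rmin_glb; lra|lra]|
            apply Rle_trans with (Rmax z y); [lra|apply Rmax_lub; lra]]. }
  rewrite Hc1. apply Rmult_le_compat_r; [apply Rabs_pos|].
  apply (h_M _ _ _ _ _ _ _ _ _ _ H).
  unfold inD in *. destruct Hy, Hz.
  split; [apply Rle_trans with (Rmin z y); [apply Rmin_glb; lra|lra]|
          apply Rle_trans with (Rmax z y); [lra|apply Rmax_lub; lra]].
Qed.

Lemma Lset_lub a b f f' f'' Lbar M K rd x : Hyp a b f f' f'' Lbar M K rd x ->
  forall c e, inD a b c -> 0 <= e -> exists l, is_lub (L_set a b f' c e) l.
Proof.
  intros H c e Hc He.
  destruct (completeness (L_set a b f' c e)) as [l Hl].
  - exists (Rabs (f' c) + M * e). intros z [y [Hy [Hyc ->]]].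
    pose proof (Lip_f' _ _ _ _ _ _ _ _ _ _ H y c Hy Hc).
    pose proof (Rabs_triang_inv (f' y) (f' c)).
    pose proof (M_nonneg _ _ _ _ _ _ _ _ _ _ H).
    assert (M * Rabs (y - c) <= M * e) by (apply Rmult_le_compat_l; lra). lra.
  - exists (Rabs (f' c)). exists c. split; auto. split; auto.
    rewrite Rminus_diag, Rabs_R0; auto.
  - exists l; auto.
Qed.

Lemma xhat_S f Lbar rd m x n :
  xhat f Lbar rd m x (S n) = rd m (f (xhat f Lbar rd m x n)).
Proof. unfold xhat; simpl. destruct (computed f Lbar rd m x n); reflexivity. Qed.

Lemma ebar_S f Lbar rd m x n :
  ebar f Lbar rd m x (S n) =
  Lbar (xhat f Lbar rd m x n) (ebar f Lbar rd m x n) * ebar f Lbar rd m x n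
   + / 2 ^ m * Rabs (xhat f Lbar rd m x (S n)).
Proof. unfold xhat, ebar; simpl. destruct (computed f Lbar rd m x n); reflexivity. Qed.

Lemma xhat_0 f Lbar rd m x : xhat f Lbar rd m x 0 = rd m x.
Proof. reflexivity. Qed.
Lemma ebar_0 f Lbar rd m x : ebar f Lbar rd m x 0 = / 2 ^ m * Rabs (rd m x).
Proof. reflexivity. Qed.

Definition P2 (z : Z) : R := Rpower 2 (IZR z).

Lemma P2_pos z : 0 < P2 z.
Proof. unfold P2, Rpower. apply exp_pos. Qed.

Lemma P2_add z1 z2 : P2 (z1 + z2) = P2 z1 * P2 z2.
Proof. unfold P2. rewrite plus_IZR, Rpower_plus. reflexivity. Qed.

Lemma P2_nat (m : nat) : P2 (Z.of_nat m) = 2 ^ m.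
Proof. unfold P2. rewrite <- INR_IZR_INZ. apply Rpower_pow. lra. Qed.

Lemma P2_1 : P2 1 = 2.
Proof. unfold P2. apply Rpower_1. lra. Qed.

Lemma P2_0 : P2 0 = 1.
Proof. unfold P2. apply Rpower_O. lra. Qed.

Lemma fp_P2 m z : (1 <= m)%nat -> is_fp m (P2 z).
Proof.
  intros Hm. exists 1%Z, (z + Z.of_nat m)%Z. split.
  - assert (2 ^ 1 <= 2 ^ Z.of_nat m)%Z by (apply Z.pow_le_mono_r; lia). simpl in *; lia.
  - rewrite powerRZ_Rpower by lra. fold (P2 (z + Z.of_nat m - Z.of_nat m)).
    replace (z + Z.of_nat m - Z.of_nat m)%Z with z by lia. simpl; lra.
Qed.

Lemma fp_opp m y : is_fp m y -> is_fp m (- y).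
Proof.
  intros [s [e [H1 H2]]]. exists (- s)%Z, e. split.
  - rewrite Z.abs_opp; auto.
  - rewrite H2, opp_IZR. ring.
Qed.

Lemma exponent_ex t : 0 < t -> exists k, P2 (k - 1) <= t < P2 k.
Proof.
  intros Ht. exists (up (ln t / ln 2)).
  destruct (archimed (ln t / ln 2)) as [H1 H2].
  assert (Hl : 0 < ln 2) by (rewrite <- ln_1; apply ln_increasing; lra).
  unfold P2, Rpower. rewrite minus_IZR. split.
  - rewrite <- (exp_ln t) at 2 by auto.
    assert (Hx : (IZR (up (ln t / ln 2)) - 1) * ln 2 <= ln t).
    { assert (IZR (up (ln t / ln 2)) - 1 <= ln t / ln 2) by lra.
      apply Rmult_le_compat_r with (r := ln 2) in H; [|lra].
      unfold Rdiv in H. rewrite Rmult_assoc, Rinv_l in H by lra. lra. }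
    destruct Hx as [Hx|Hx]; [left; apply exp_increasing; auto|rewrite Hx; lra].
  - rewrite <- (exp_ln t) at 1 by auto. apply exp_increasing.
    assert (ln t / ln 2 < IZR (up (ln t / ln 2))) by lra.
    apply Rmult_lt_compat_r with (r := ln 2) in H; [|lra].
    unfold Rdiv in H. rewrite Rmult_assoc, Rinv_l in H by lra. lra.
Qed.

Lemma fp_near m t : (1 <= m)%nat -> 0 < t -> exists k z,
  P2 (k - 1) <= t /\ is_fp m z /\ Rabs (t - z) <= P2 (k - 1) * / 2 ^ m.
Proof.
  intros Hm Ht. destruct (exponent_ex t Ht) as [k [Hk1 Hk2]].
  exists k.
  set (u := t * P2 (Z.of_nat m - k)).
  assert (Hq : P2 (k - Z.of_nat m) * P2 (Z.of_nat m - k) = 1).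
  { rewrite <- P2_add. replace (k - Z.of_nat m + (Z.of_nat m - k))%Z with 0%Z by lia. apply P2_0. }
  assert (Htu : t = u * P2 (k - Z.of_nat m)).
  { unfold u. rewrite Rmult_assoc, (Rmult_comm (P2 _)), Hq. ring. }
  assert (H2m : 2 ^ m = P2 (k - 1) * P2 (Z.of_nat m - k) * 2).
  { rewrite <- P2_nat, <- P2_1, <- !P2_add. f_equal. lia. }
  assert (Hkm : P2 (k - Z.of_nat m) * / 2 = P2 (k - 1) * / 2 ^ m).
  { rewrite H2m. pose proof (P2_pos (Z.of_nat m - k)). pose proof (P2_pos (k-1)).
    assert (Ha : P2 (k - Z.of_nat m) = / P2 (Z.of_nat m - k)).
    { apply (Rmult_eq_reg_r (P2 (Z.of_nat m - k))); [rewrite Hq, Rinv_l|]; lra. }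
    rewrite Ha. field. split; lra. }
  assert (Hu1 : u < 2 ^ m).
  { rewrite <- P2_nat. unfold u.
    replace (P2 (Z.of_nat m)) with (P2 k * P2 (Z.of_nat m - k))
      by (rewrite <- P2_add; f_equal; lia).
    apply Rmult_lt_compat_r; auto. apply P2_pos. }
  assert (Hu0 : 0 <= u) by (unfold u; pose proof (P2_pos (Z.of_nat m - k)); nra).
  pose proof (P2_pos (k - Z.of_nat m)) as Hpk.
  destruct (Rlt_or_le u (2 ^ m - / 2)) as [Hu2|Hu2].
  - set (s := (up (u + / 2) - 1)%Z).
    destruct (archimed (u + / 2)) as [Ha1 Ha2].
    assert (Hs1 : IZR s <= u + / 2) by (unfold s; rewrite minus_IZR; lra).
    assert (Hs2 : u - / 2 < IZR s) by (unfold s; rewrite minus_IZR; lra).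
    exists (IZR s * P2 (k - Z.of_nat m)). split; [auto|split].
    + exists s, k. split.
      * assert (-1 < s)%Z by (apply lt_IZR; simpl; lra).
        assert (s < 2 ^ Z.of_nat m)%Z.
        { apply lt_IZR. rewrite <- pow_IZR. lra. }
        lia.
      * rewrite powerRZ_Rpower by lra. reflexivity.
    + rewrite Htu, <- Rmult_minus_distr_r, Rabs_mult, (Rabs_pos_eq (P2 _)) by lra.
      rewrite <- Hkm, Rmult_comm. apply Rmult_le_compat_l; [lra|].
      apply Rabs_le; lra.
  - exists (P2 k). split; [auto|split].
    + replace k with (k + 1 - 1)%Z at 1 by lia. apply fp_P2; auto.
    + assert (HPk : P2 k = 2 ^ m * P2 (k - Z.of_nat m)).
      { rewrite <- P2_nat, <- P2_add. f_equal; lia. }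
      rewrite Htu, HPk, <- Rmult_minus_distr_r, Rabs_mult, (Rabs_pos_eq (P2 _)) by lra.
      rewrite <- Hkm, Rmult_comm. apply Rmult_le_compat_l; [lra|].
      apply Rabs_le; lra.
Qed.

Lemma round_err rd m y : is_round_nearest rd -> (1 <= m)%nat ->
  Rabs (y - rd m y) <= / 2 ^ m * Rabs (rd m y).
Proof.
  intros Hrd Hm. destruct (Hrd m y) as [_ Hnear].
  assert (Hpm : 0 < / 2 ^ m) by (apply Rinv_0_lt_compat, pow_lt; lra).
  destruct (Rtotal_order y 0) as [Hy|[Hy|Hy]].
  - destruct (fp_near m (- y) Hm ltac:(lra)) as [k [z [Hk [Hz Hd]]]].
    pose proof (Hnear (- z) (fp_opp _ _ Hz)) as H1.
    pose proof (Hnear (- P2 (k-1)) (fp_opp _ _ (fp_P2 m (k-1) Hm))) as H2.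
    replace (y - - z) with (- (- y - z)) in H1 by ring. rewrite Rabs_Ropp in H1.
    rewrite (Rabs_left1 (y - - P2 (k-1))) in H2 by lra.
    assert (Hr : rd m y <= - P2 (k-1)).
    { pose proof (Rle_abs (rd m y - y)). rewrite Rabs_minus_sym in H. lra. }
    rewrite (Rabs_left (rd m y)) by (pose proof (P2_pos (k-1)); lra).
    eapply Rle_trans; [apply H1|]. eapply Rle_trans; [apply Hd|].
    rewrite Rmult_comm. apply Rmult_le_compat_l; lra.
  - subst y. pose proof (Hnear 0 ltac:(exists 0%Z, 0%Z; split; [simpl; pose proof (Z.pow_pos_nonneg 2 (Z.of_nat m) ltac:(lia) ltac:(lia)); lia|ring])).
    rewrite Rminus_diag, Rabs_R0 in H.
    assert (Hz : rd m 0 = 0).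
    { pose proof (Rabs_pos (0 - rd m 0)). assert (Rabs (0 - rd m 0) = 0) by lra.
      destruct (Rcase_abs (0 - rd m 0)); [rewrite Rabs_left in H1|rewrite Rabs_right in H1]; lra. }
    rewrite Hz, Rminus_diag, Rabs_R0. lra.
  - destruct (fp_near m y Hm Hy) as [k [z [Hk [Hz Hd]]]].
    pose proof (Hnear z Hz) as H1.
    pose proof (Hnear (P2 (k-1)) (fp_P2 m (k-1) Hm)) as H2.
    rewrite (Rabs_pos_eq (y - P2 (k-1))) in H2 by lra.
    assert (Hr : P2 (k-1) <= rd m y).
    { pose proof (Rle_abs (y - rd m y)). lra. }
    rewrite (Rabs_pos_eq (rd m y)) by (pose proof (P2_pos (k-1)); lra).
    eapply Rle_trans; [apply H1|]. eapply Rle_trans; [apply Hd|].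
    rewrite Rmult_comm. apply Rmult_le_compat_l; lra.
Qed.

Lemma Lbar_bounds a b f f' f'' Lbar M K rd x : Hyp a b f f' f'' Lbar M K rd x ->
  forall c e y0, inD a b c -> 0 <= e -> inD a b y0 -> Rabs (y0 - c) <= e ->
  Rabs (f' y0) <= Lbar c e /\ Lbar c e <= Rabs (f' y0) + (2 * M + K) * e
  /\ forall y, inD a b y -> Rabs (y - c) <= e -> Rabs (f' y) <= Lbar c e.
Proof.
  intros H c e y0 Hc He Hy0 Hyc.
  destruct (Lset_lub _ _ _ _ _ _ _ _ _ _ H c e Hc He) as [l Hl].
  destruct (h_Lbar _ _ _ _ _ _ _ _ _ _ H c e l Hc He Hl) as [H1 H2].
  assert (Hup : forall y, inD a b y -> Rabs (y - c) <= e -> Rabs (f' y) <= l).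
  { intros y Hy Hyc'. apply (proj1 Hl). exists y. auto. }
  split; [|split].
  - specialize (Hup y0 Hy0 Hyc). lra.
  - assert (l <= Rabs (f' y0) + 2 * M * e).
    { apply (proj2 Hl). intros z [y [Hy [Hyc' ->]]].
      pose proof (Lip_f' _ _ _ _ _ _ _ _ _ _ H y y0 Hy Hy0).
      pose proof (Rabs_triang_inv (f' y) (f' y0)).
      pose proof (M_nonneg _ _ _ _ _ _ _ _ _ _ H).
      assert (Rabs (y - y0) <= 2 * e).
      { replace (y - y0) with ((y - c) - (y0 - c)) by ring.
        pose proof (Rabs_triang (y - c) (- (y0 - c))). rewrite Rabs_Ropp in H5.
        unfold Rminus at 1; lra. }
      assert (M * Rabs (y - y0) <= M * (2 * e)) by (apply Rmult_le_compat_l; lra). lra. }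
    lra.
  - intros y Hy Hyc'. specialize (Hup y Hy Hyc'). lra.
Qed.

Lemma validity a b f f' f'' Lbar M K rd x : Hyp a b f f' f'' Lbar M K rd x ->
  forall m, (1 <= m)%nat -> forall n,
  0 <= ebar f Lbar rd m x n /\
  Rabs (orbit f x n - xhat f Lbar rd m x n) <= ebar f Lbar rd m x n.
Proof.
  intros H m Hm. pose proof (h_rd _ _ _ _ _ _ _ _ _ _ H) as Hrd.
  assert (Hpm : 0 < / 2 ^ m) by (apply Rinv_0_lt_compat, pow_lt; lra).
  induction n.
  - rewrite ebar_0. simpl orbit. rewrite xhat_0. split.
    + pose proof (Rabs_pos (rd m x)). nra.
    + apply round_err; auto.
  - destruct IHn as [He Hv].
    set (c := xhat f Lbar rd m x n) in *. set (e := ebar f Lbar rd m x n) in *.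
    assert (Hc : inD a b c) by (apply (h_xh _ _ _ _ _ _ _ _ _ _ H); auto).
    assert (HxD : inD a b (orbit f x n)) by (apply (orbit_D _ _ _ _ _ _ _ _ _ _ H)).
    assert (Hv' : Rabs (orbit f x n - c) <= e) by auto.
    destruct (Lbar_bounds _ _ _ _ _ _ _ _ _ _ H c e (orbit f x n) Hc He HxD Hv')
      as [HL1 [_ HL3]].
    rewrite ebar_S, xhat_S. fold c e. split.
    + pose proof (Rabs_pos (f' (orbit f x n))).
      pose proof (Rabs_pos (rd m (f c))).
      assert (0 <= Lbar c e * e) by (apply Rmult_le_pos; lra). nra.
    + simpl orbit.
      destruct (MVT_abs f f' c (orbit f x n)) as [xi [Hxi1 Hxi2]].
      { intros y Hy. apply (h_f' _ _ _ _ _ _ _ _ _ _ H).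
        unfold inD in *. destruct Hc, HxD.
        split; [apply Rle_trans with (Rmin c (orbit f x n)); [apply Rmin_glb; lra|lra]|
                apply Rle_trans with (Rmax c (orbit f x n)); [lra|apply Rmax_lub; lra]]. }
      assert (HxiD : inD a b xi).
      { unfold inD in *. destruct Hc, HxD.
        split; [apply Rle_trans with (Rmin c (orbit f x n)); [apply Rmin_glb; lra|lra]|
                apply Rle_trans with (Rmax c (orbit f x n)); [lra|apply Rmax_lub; lra]]. }
      assert (Hxic : Rabs (xi - c) <= e).
      { eapply Rle_trans; [|apply Hv'].
        destruct (Rle_dec c (orbit f x n)) as [Hle|Hle];
        [rewrite Rmin_left, Rmax_right in Hxi2 by lra|rewrite Rmin_right, Rmax_left in Hxi2 by lra];
        unfold Rabs; repeat destruct Rcase_abs; lra. }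
      pose proof (HL3 xi HxiD Hxic) as Hxi.
      pose proof (round_err rd m (f c) Hrd Hm) as Hr.
      replace (f (orbit f x n) - rd m (f c)) with ((f (orbit f x n) - f c) + (f c - rd m (f c))) by ring.
      eapply Rle_trans; [apply Rabs_triang|].
      apply Rplus_le_compat; [|auto].
      rewrite Hxi1. rewrite Rabs_minus_sym in Hv'.
      apply Rmult_le_compat; try apply Rabs_pos; auto.
Qed.

Lemma ln_le' x y : 0 < x -> x <= y -> ln x <= ln y.
Proof. intros Hx [H|H]; [left; apply ln_increasing; auto|subst; lra]. Qed.

Lemma exp_le' x y : x <= y -> exp x <= exp y.
Proof. intros [H|H]; [left; apply exp_increasing; auto|subst; lra]. Qed.

Lemma ln2_pos : 0 < ln 2.
Proof. rewrite <- ln_1; apply ln_increasing; lra. Qed.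

Lemma pow2_exp m : 2 ^ m = exp (INR m * ln 2).
Proof. rewrite <- Rpower_pow by lra. reflexivity. Qed.

Definition Ssum (f f' : R -> R) x n := psum (fun k => ln (Rabs (f' (orbit f x k)))) n.

Lemma exp_Ssum_S f f' x n : f' (orbit f x n) <> 0 ->
  exp (Ssum f f' x (S n)) = exp (Ssum f f' x n) * Rabs (f' (orbit f x n)).
Proof.
  intros Hnz. unfold Ssum; simpl. rewrite exp_plus, exp_ln; auto.
  apply Rabs_pos_lt; auto.
Qed.

Lemma ebar_lower a b f f' f'' Lbar M K rd x : Hyp a b f f' f'' Lbar M K rd x ->
  forall m, (1 <= m)%nat -> forall n,
  / 2 ^ m * Rabs (rd m x) * exp (Ssum f f' x n) <= ebar f Lbar rd m x n.
Proof.
  intros H m Hm. induction n.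
  - rewrite ebar_0. unfold Ssum; simpl. rewrite exp_0. lra.
  - rewrite exp_Ssum_S by apply (h_f'nz _ _ _ _ _ _ _ _ _ _ H).
    rewrite ebar_S.
    destruct (validity _ _ _ _ _ _ _ _ _ _ H m Hm n) as [He Hv].
    assert (Hc : inD a b (xhat f Lbar rd m x n)) by (apply (h_xh _ _ _ _ _ _ _ _ _ _ H); auto).
    destruct (Lbar_bounds _ _ _ _ _ _ _ _ _ _ H _ _ (orbit f x n) Hc He
      (orbit_D _ _ _ _ _ _ _ _ _ _ H n) Hv) as [HL1 _].
    assert (Hpm : 0 < / 2 ^ m) by (apply Rinv_0_lt_compat, pow_lt; lra).
    pose proof (Rabs_pos (xhat f Lbar rd m x (S n))).
    pose proof (Rabs_pos (f' (orbit f x n))).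
    assert (Rabs (f' (orbit f x n)) * ebar f Lbar rd m x n <=
            Lbar (xhat f Lbar rd m x n) (ebar f Lbar rd m x n) * ebar f Lbar rd m x n)
      by (apply Rmult_le_compat_r; auto).
    assert (Rabs (f' (orbit f x n)) * (/ 2 ^ m * Rabs (rd m x) * exp (Ssum f f' x n)) <=
            Rabs (f' (orbit f x n)) * ebar f Lbar rd m x n)
      by (apply Rmult_le_compat_l; auto).
    nra.
Qed.

Definition B0 a b := Rmax (Rabs a) (Rabs b).

Lemma cp_bounds (p : Z) : 0 < powerRZ 10 (- p) / (1 + powerRZ 10 (- p)) <= 1.
Proof.
  pose proof (powerRZ_lt 10 (- p) ltac:(lra)).
  split. apply Rdiv_lt_0_compat; lra.
  apply Rmult_le_reg_r with (1 + powerRZ 10 (-p)); [lra|].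
  unfold Rdiv; rewrite Rmult_assoc, Rinv_l by lra. lra.
Qed.

Lemma lower_bound a b f f' f'' Lbar M K rd x : Hyp a b f f' f'' Lbar M K rd x ->
  forall m N p, (1 <= m)%nat -> prec_ok f Lbar rd x m N p ->
  Ssum f f' x N + ln (Rabs x) - ln 2 - ln (B0 a b) <= INR m * ln 2.
Proof.
  intros H m N p Hm Hok.
  pose proof (Hok N (Nat.le_refl N)) as HN.
  pose proof (cp_bounds p) as Hcp.
  assert (HxN : Rabs (xhat f Lbar rd m x N) <= B0 a b)
    by (apply inD_abs, (h_xh _ _ _ _ _ _ _ _ _ _ H); auto).
  pose proof (Rabs_pos (xhat f Lbar rd m x N)).
  pose proof (ebar_lower _ _ _ _ _ _ _ _ _ _ H m Hm N) as Hlow.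
  assert (Hx0 : 0 < Rabs x) by (apply Rabs_pos_lt; apply (h_nz _ _ _ _ _ _ _ _ _ _ H 0%nat)).
  assert (Hr : Rabs x / 2 <= Rabs (rd m x)).
  { pose proof (round_err rd m x (h_rd _ _ _ _ _ _ _ _ _ _ H) Hm).
    assert (/ 2 ^ m <= / 2).
    { apply Rinv_le_contravar; [lra|]. replace 2 with (2 ^ 1) at 1 by ring.
      apply Rle_pow; auto; lra. }
    pose proof (Rabs_triang_inv x (rd m x)). pose proof (Rabs_pos (rd m x)). nra. }
  assert (Hchain : exp (- (INR m * ln 2)) * (Rabs x / 2) * exp (Ssum f f' x N) <= B0 a b).
  { rewrite exp_Ropp, <- pow2_exp.
    assert (Hpm : 0 < / 2 ^ m) by (apply Rinv_0_lt_compat, pow_lt; lra).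
    pose proof (exp_pos (Ssum f f' x N)).
    assert (/ 2 ^ m * (Rabs x / 2) * exp (Ssum f f' x N) <=
            / 2 ^ m * Rabs (rd m x) * exp (Ssum f f' x N)).
    { apply Rmult_le_compat_r; [lra|]. apply Rmult_le_compat_l; lra. }
    assert (powerRZ 10 (- p) / (1 + powerRZ 10 (- p)) * Rabs (xhat f Lbar rd m x N)
             <= Rabs (xhat f Lbar rd m x N)).
    { rewrite <- (Rmult_1_l (Rabs (xhat _ _ _ _ _ _))) at 2.
      apply Rmult_le_compat_r; lra. }
    lra. }
  assert (HB : 0 < B0 a b) by (unfold B0; pose proof (Rabs_pos a); pose proof (Rmax_r (Rabs a) (Rabs b));
     pose proof (Rmax_l (Rabs a) (Rabs b)); pose proof (inD_abs _ _ _ (h_x _ _ _ _ _ _ _ _ _ _ H)); fold (B0 a b) in *; lra).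
  apply ln_le' in Hchain.
  - rewrite !ln_mult in Hchain; try apply exp_pos; try lra.
    + rewrite !ln_exp in Hchain. unfold Rdiv in Hchain.
      rewrite ln_mult, ln_Rinv in Hchain by lra. lra.
    + apply Rmult_lt_0_compat; [apply exp_pos|lra].
  - apply Rmult_lt_0_compat; [apply Rmult_lt_0_compat; [apply exp_pos|lra]|apply exp_pos].
Qed.

Lemma psum_le_const g n E : (forall k, (k < n)%nat -> g k <= E) -> psum g n <= INR n * E.
Proof.
  induction n; intros Hk. simpl; lra.
  rewrite S_INR. simpl psum. specialize (IHn (fun k Hk' => Hk k ltac:(lia))). specialize (Hk n ltac:(lia)). lra.
Qed.

Lemma psum_scal c g n : c * psum g n = psum (fun k => c * g k) n.
Proof. induction n; simpl. ring. rewrite <- IHn. ring. Qed.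

Lemma psum_nonneg g n : (forall k, 0 <= g k) -> 0 <= psum g n.
Proof. intros H; induction n; simpl. lra. specialize (H n). lra. Qed.

Lemma psum_term g n k : (forall k, 0 <= g k) -> (k < n)%nat -> g k <= psum g n.
Proof.
  intros H; induction n; intros Hk. lia. simpl.
  destruct (Nat.eq_dec k n) as [->|Hne].
  - pose proof (psum_nonneg g n H). lra.
  - specialize (IHn ltac:(lia)). specialize (H n). lra.
Qed.

Lemma CVB (g : nat -> R) l : Un_cv (fun n => g n / INR n) l ->
  forall d, 0 < d -> exists C, 0 <= C /\ forall n, Rabs (g n - INR n * l) <= d * INR n + C.
Proof.
  intros Hc d Hd. destruct (Hc d Hd) as [N1 HN1].
  set (h := fun k => Rabs (g k - INR k * l)).
  exists (psum h (S N1)). split.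
  - apply psum_nonneg. intros; apply Rabs_pos.
  - intros n. destruct (le_lt_dec n N1) as [Hn|Hn].
    + pose proof (psum_term h (S N1) n ltac:(intros; apply Rabs_pos) ltac:(lia)).
      pose proof (pos_INR n). unfold h in *. nra.
    + specialize (HN1 n ltac:(lia)). unfold R_dist in HN1.
      assert (Hn0 : 0 < INR n) by (apply lt_0_INR; lia).
      replace (g n - INR n * l) with (INR n * (g n / INR n - l)) by (field; lra).
      rewrite Rabs_mult, Rabs_pos_eq by lra.
      pose proof (psum_nonneg h (S N1) ltac:(intros; apply Rabs_pos)). nra.
Qed.

Lemma min_abs_le f x N n : (n <= N)%nat -> orbit_min_abs f x N <= Rabs (orbit f x n).
Proof.
  induction N; intros Hn.
  - assert (n = 0%nat) by lia. subst. simpl. lra.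
  - simpl. destruct (Nat.eq_dec n (S N)) as [->|Hne].
    + apply Rmin_r.
    + eapply Rle_trans; [apply Rmin_l|]. apply IHN; lia.
Qed.

Lemma min_abs_pos f x N : (forall n, orbit f x n <> 0) -> 0 < orbit_min_abs f x N.
Proof.
  intros H; induction N; simpl.
  - apply Rabs_pos_lt, (H 0%nat).
  - apply Rmin_glb_lt; auto. apply Rabs_pos_lt, (H (S N)).
Qed.

Lemma ln_le_lin y d : 0 < y -> 0 < d -> ln y <= d * y - 1 - ln d.
Proof.
  intros Hy Hd.
  assert (H : forall z, 0 < z -> ln z <= z - 1).
  { intros z Hz. rewrite <- (ln_exp (z - 1)). apply ln_le'; auto.
    destruct (Req_dec (z - 1) 0) as [H0|H0].
    - rewrite H0, exp_0. lra.
    - pose proof (exp_ineq1 (z - 1) H0). lra. }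
  pose proof (H (d * y) ltac:(nra)). rewrite ln_mult in H0 by auto. lra.
Qed.

Lemma pow_1eta_le (e : R) n : 0 <= e -> (1 + e) ^ n <= exp (INR n * e).
Proof.
  intros He. induction n.
  - simpl. rewrite Rmult_0_l, exp_0. lra.
  - rewrite S_INR. simpl pow. replace ((INR n + 1) * e) with (INR n * e + e) by ring. rewrite exp_plus.
    assert (1 + e <= exp e).
    { destruct (Req_dec e 0) as [H0|H0]. rewrite H0, exp_0; lra. pose proof (exp_ineq1 e H0); lra. }
    rewrite Rmult_comm. apply Rmult_le_compat; try lra.
    apply pow_le; lra.
Qed.

Lemma ln2_lt_1 : ln 2 < 1.
Proof.
  rewrite <- (ln_exp 1). apply ln_increasing. lra.
  pose proof (exp_ineq1 1 ltac:(lra)). lra.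
Qed.

Definition Wsum f f' x n := psum (fun j => exp (- Ssum f f' x j)) (S n).
Definition Gb a b f f' x (eta : R) n :=
  B0 a b * (1 + eta) ^ n * exp (Ssum f f' x n) * Wsum f f' x n.

Lemma B0_pos a b f f' f'' Lbar M K rd x : Hyp a b f f' f'' Lbar M K rd x -> 0 < B0 a b.
Proof.
  intros H. pose proof (h_ab _ _ _ _ _ _ _ _ _ _ H). unfold B0.
  pose proof (Rmax_r (Rabs a) (Rabs b)); pose proof (Rmax_l (Rabs a) (Rabs b)).
  unfold Rabs in *; repeat destruct Rcase_abs; lra.
Qed.

Lemma Wsum_pos f f' x n : 0 < Wsum f f' x n.
Proof.
  unfold Wsum. simpl psum. pose proof (exp_pos (- Ssum f f' x n)).
  pose proof (psum_nonneg (fun j => exp (- Ssum f f' x j)) n ltac:(intros; left; apply exp_pos)).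
  lra.
Qed.

Lemma invariant a b f f' f'' Lbar M K rd x : Hyp a b f f' f'' Lbar M K rd x ->
  forall m, (1 <= m)%nat -> forall N eta Lf Hh, 0 < eta -> 0 < Lf ->
  (forall n, (n < N)%nat -> Lf <= Rabs (f' (orbit f x n))) ->
  (2 * M + K + 1) * (/ 2 ^ m * Hh) <= eta * Lf ->
  (forall n, (n <= N)%nat -> Gb a b f f' x eta n <= Hh) ->
  forall n, (n <= N)%nat -> ebar f Lbar rd m x n <= / 2 ^ m * Gb a b f f' x eta n.
Proof.
  intros H m Hm N eta Lf Hh Heta HLf HLfn Hsmall HG.
  assert (Hpm : 0 < / 2 ^ m) by (apply Rinv_0_lt_compat, pow_lt; lra).
  pose proof (M_nonneg _ _ _ _ _ _ _ _ _ _ H) as HM.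
  pose proof (h_K _ _ _ _ _ _ _ _ _ _ H) as HK.
  pose proof (B0_pos _ _ _ _ _ _ _ _ _ _ H) as HB.
  induction n; intros Hn.
  - rewrite ebar_0. unfold Gb, Wsum, Ssum. simpl. rewrite Ropp_0, exp_0.
    apply Rmult_le_compat_l; [lra|].
    assert (Rabs (rd m x) <= B0 a b).
    { apply inD_abs. apply (h_xh _ _ _ _ _ _ _ _ _ _ H m 0%nat Hm). }
    lra.
  - specialize (IHn ltac:(lia)).
    destruct (validity _ _ _ _ _ _ _ _ _ _ H m Hm n) as [He Hv].
    assert (Hc : inD a b (xhat f Lbar rd m x n)) by (apply (h_xh _ _ _ _ _ _ _ _ _ _ H); auto).
    destruct (Lbar_bounds _ _ _ _ _ _ _ _ _ _ H _ _ (orbit f x n) Hc He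
      (orbit_D _ _ _ _ _ _ _ _ _ _ H n) Hv) as [HL1 [HL2 _]].
    set (e := ebar f Lbar rd m x n) in *.
    set (fn := Rabs (f' (orbit f x n))) in *.
    set (Ln := Lbar (xhat f Lbar rd m x n) e) in *.
    assert (HeH : e <= / 2 ^ m * Hh).
    { eapply Rle_trans; [apply IHn|]. apply Rmult_le_compat_l; [lra|]. apply HG; lia. }
    assert (Hfn : Lf <= fn) by (apply HLfn; lia).
    assert (HLn : Ln <= fn * (1 + eta)).
    { assert ((2 * M + K) * e <= eta * fn).
      { assert ((2 * M + K) * e <= (2 * M + K + 1) * e) by nra.
        assert ((2 * M + K + 1) * e <= (2 * M + K + 1) * (/ 2 ^ m * Hh)) by (apply Rmult_le_compat_l; lra).
        assert (eta * Lf <= eta * fn) by (apply Rmult_le_compat_l; lra).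
        lra. }
      lra. }
    rewrite ebar_S. fold e Ln.
    assert (HxS : Rabs (xhat f Lbar rd m x (S n)) <= B0 a b).
    { apply inD_abs. apply (h_xh _ _ _ _ _ _ _ _ _ _ H); auto. }
    assert (HGS : Gb a b f f' x eta (S n) >= fn * (1 + eta) * Gb a b f f' x eta n + B0 a b).
    { unfold Gb.
      assert (HW : Wsum f f' x (S n) = Wsum f f' x n + exp (- Ssum f f' x (S n))) by reflexivity.
      assert (Hone : exp (Ssum f f' x (S n)) * exp (- Ssum f f' x (S n)) = 1)
        by (rewrite <- exp_plus, Rplus_opp_r, exp_0; auto).
      rewrite exp_Ssum_S in Hone |- * by apply (h_f'nz _ _ _ _ _ _ _ _ _ _ H). fold fn in Hone |- *.
      rewrite HW. simpl pow.
      assert (Hpe : 1 <= (1 + eta) * (1 + eta) ^ n).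
      { pose proof (pow_R1_Rle (1 + eta) n ltac:(lra)). nra. }
      set (P := (1 + eta) ^ n) in *.
      set (X := exp (Ssum f f' x n)) in *.
      set (Y := exp (- Ssum f f' x (S n))) in *.
      set (W := Wsum f f' x n).
      assert (B0 a b * ((1 + eta) * P) * (X * fn) * (W + Y) =
              fn * (1 + eta) * (B0 a b * P * X * W) + B0 a b * ((1 + eta) * P) * (X * fn * Y)) by ring.
      rewrite H0, Hone. nra. }
    assert (HGn : 0 <= Gb a b f f' x eta n).
    { unfold Gb. pose proof (Wsum_pos f f' x n). pose proof (exp_pos (Ssum f f' x n)).
      pose proof (pow_le (1 + eta) n ltac:(lra)).
      apply Rmult_le_pos; [|lra]. apply Rmult_le_pos; [|lra]. apply Rmult_le_pos; lra. }
    assert (Ln * e <= fn * (1 + eta) * (/ 2 ^ m * Gb a b f f' x eta n)).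
    { pose proof (Rabs_pos (f' (orbit f x n))). fold fn in H0.
      apply Rmult_le_compat; lra. }
    assert (/ 2 ^ m * Rabs (xhat f Lbar rd m x (S n)) <= / 2 ^ m * B0 a b)
      by (apply Rmult_le_compat_l; lra).
    nra.
Qed.

Lemma INR_Sto_nat_bounds z : 1 + IZR z <= INR (S (Z.to_nat z)) /\ INR (S (Z.to_nat z)) <= 1 + Rmax 0 (IZR z).
Proof.
  rewrite S_INR. destruct (Z_le_gt_dec 0 z) as [Hz|Hz].
  - rewrite INR_IZR_INZ, Z2Nat.id by lia. rewrite Rmax_right by (apply IZR_le; lia). lra.
  - replace (Z.to_nat z) with 0%nat by lia. simpl. rewrite Rmax_left by (apply IZR_le; lia).
    assert (IZR z <= 0) by (apply IZR_le; lia). lra.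
Qed.

Lemma Gb_bound a b f f' f'' Lbar M K rd x : Hyp a b f f' f'' Lbar M K rd x ->
  forall N E, 0 < E -> (forall j n, (j <= n)%nat -> (n <= N)%nat -> Ssum f f' x n - Ssum f f' x j <= ln E) ->
  forall n, (n <= N)%nat -> Gb a b f f' x (/ (INR N + 1)) n <= 3 * B0 a b * (INR N + 1) * E.
Proof.
  intros H N E HE HS n Hn.
  pose proof (B0_pos _ _ _ _ _ _ _ _ _ _ H) as HB.
  assert (HN1 : 0 < INR N + 1) by (pose proof (pos_INR N); lra).
  assert (Hpow : (1 + / (INR N + 1)) ^ n <= 3).
  { eapply Rle_trans; [apply pow_1eta_le; left; apply Rinv_0_lt_compat; lra|].
    eapply Rle_trans; [|apply exp_le_3]. apply exp_le'.
    assert (INR n <= INR N) by (apply le_INR; auto).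
    apply Rmult_le_reg_r with (INR N + 1); [lra|].
    rewrite Rmult_assoc, Rinv_l by lra. lra. }
  assert (HW : exp (Ssum f f' x n) * Wsum f f' x n <= (INR N + 1) * E).
  { unfold Wsum. rewrite psum_scal.
    eapply Rle_trans; [apply psum_le_const with (E := E)|].
    - intros k Hk. rewrite <- exp_plus. rewrite <- (exp_ln E) by auto. apply exp_le'.
      specialize (HS k n ltac:(lia) Hn). lra.
    - rewrite S_INR. apply Rmult_le_compat_r; [lra|]. apply Rplus_le_compat_r, le_INR; auto. }
  unfold Gb.
  pose proof (pow_le (1 + / (INR N + 1)) n ltac:(pose proof (Rinv_0_lt_compat _ HN1); lra)).
  pose proof (exp_pos (Ssum f f' x n)). pose proof (Wsum_pos f f' x n).
  assert (0 <= exp (Ssum f f' x n) * Wsum f f' x n) by nra.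
  replace (B0 a b * (1 + / (INR N + 1)) ^ n * exp (Ssum f f' x n) * Wsum f f' x n)
    with (B0 a b * ((1 + / (INR N + 1)) ^ n * (exp (Ssum f f' x n) * Wsum f f' x n))) by ring.
  replace (3 * B0 a b * (INR N + 1) * E) with (B0 a b * (3 * ((INR N + 1) * E))) by ring.
  apply Rmult_le_compat_l; [lra|]. apply Rmult_le_compat; lra.
Qed.

Lemma Rabs_def2b x y : Rabs x <= y -> - y <= x <= y.
Proof. unfold Rabs; destruct Rcase_abs; lra. Qed.

Lemma upper a b f f' f'' Lbar M K rd x lam : Hyp a b f f' f'' Lbar M K rd x ->
  Un_cv (lyap_avg f f' x) lam ->
  Un_cv (fun N => ld (orbit_min_abs f x N) / INR N) 0 ->
  forall (p : Z) d, (0 <= p)%Z -> 0 < d -> exists A, forall N, (1 <= N)%nat ->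
  exists m, (1 <= m)%nat /\ prec_ok f Lbar rd x m N p /\
    INR m <= INR N * (Rmax 0 lam + 6 * d) / ln 2 + A.
Proof.
  intros H Hlam Hmin p d Hp Hd.
  destruct (CVB (Ssum f f' x) lam Hlam d Hd) as [C [HC0 HC]].
  destruct (CVB (fun N => ld (orbit_min_abs f x N)) 0 Hmin d Hd) as [C3 [HC30 HC3]].
  pose proof (M_nonneg _ _ _ _ _ _ _ _ _ _ H) as HM.
  pose proof (h_K _ _ _ _ _ _ _ _ _ _ H) as HK.
  pose proof (B0_pos _ _ _ _ _ _ _ _ _ _ H) as HB.
  pose proof ln2_pos as Hl2. pose proof ln2_lt_1 as Hl21.
  set (mu := Rmax 0 lam).
  assert (Hmu0 : 0 <= mu) by apply Rmax_l.
  assert (Hmul : lam <= mu) by apply Rmax_r.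
  set (C4 := 2 * M + K).
  set (tl := IZR (- p) * ln 10).
  set (br1 := ln (C4 + 1) + ln 3 + ln (B0 a b) + 2 * (d - 1 - ln d) + 4 * C + Rabs lam + d).
  set (br2 := ln 4 + ln 3 + ln (B0 a b) + (d - 1 - ln d) + 2 * C - tl + C3 * ln 2).
  set (K0 := Rabs br1 + Rabs br2).
  exists (2 + K0 / ln 2).
  intros N HN.
  assert (HN0 : 1 <= INR N) by (apply (le_INR 1); auto).
  set (lnN := ln (INR N + 1)).
  assert (HlnN : lnN <= d * (INR N + 1) - 1 - ln d) by (apply ln_le_lin; lra).
  set (lnH := ln 3 + ln (B0 a b) + lnN + (INR N * (mu + 2 * d) + 2 * C)).
  set (X1 := ln (C4 + 1) + lnH + lnN + (Rabs lam + d * (2 * INR N + 1) + 2 * C)).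
  set (X2 := ln 4 + lnH - tl + (d * INR N + C3) * ln 2).
  set (m := S (Z.to_nat (up (Rmax X1 X2 / ln 2)))).
  destruct (INR_Sto_nat_bounds (up (Rmax X1 X2 / ln 2))) as [Hm1 Hm2].
  fold m in Hm1, Hm2.
  destruct (archimed (Rmax X1 X2 / ln 2)) as [Har1 Har2].
  assert (HmX : Rmax X1 X2 <= INR m * ln 2).
  { assert (Rmax X1 X2 / ln 2 <= INR m) by lra.
    apply Rmult_le_compat_r with (r := ln 2) in H0; [|lra].
    unfold Rdiv in H0. rewrite Rmult_assoc, Rinv_l in H0 by lra. lra. }
  pose proof (Rmax_l X1 X2) as HX1. pose proof (Rmax_r X1 X2) as HX2.
  exists m. split; [unfold m; lia|].
  assert (Hm : (1 <= m)%nat) by (unfold m; lia).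
  set (E := exp (INR N * (mu + 2 * d) + 2 * C)).
  assert (HE : 0 < E) by apply exp_pos.
  assert (HSS : forall j n, (j <= n)%nat -> (n <= N)%nat -> Ssum f f' x n - Ssum f f' x j <= ln E).
  { intros j n Hj Hn. unfold E. rewrite ln_exp.
    pose proof (HC n) as H1. pose proof (HC j) as H2.
    apply Rabs_def2b in H1. apply Rabs_def2b in H2.
    assert (Hjn : INR j <= INR n) by (apply le_INR; auto).
    assert (HnN : INR n <= INR N) by (apply le_INR; auto).
    pose proof (pos_INR j).
    assert ((INR n - INR j) * lam <= (INR n - INR j) * mu) by (apply Rmult_le_compat_l; lra).
    assert ((INR n - INR j) * mu <= INR N * mu) by (apply Rmult_le_compat_r; lra).
    nra. }
  set (Hh := 3 * B0 a b * (INR N + 1) * E).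
  assert (HHh : Hh = exp lnH).
  { unfold Hh, lnH, E, lnN. rewrite !exp_plus, !exp_ln; try lra; try ring. }
  set (Lf := exp (- (Rabs lam + d * (2 * INR N + 1) + 2 * C))).
  assert (HLf : 0 < Lf) by apply exp_pos.
  assert (HLfn : forall n, (n < N)%nat -> Lf <= Rabs (f' (orbit f x n))).
  { intros n Hn.
    rewrite <- (exp_ln (Rabs (f' (orbit f x n)))) by (apply Rabs_pos_lt, (h_f'nz _ _ _ _ _ _ _ _ _ _ H)).
    apply exp_le'.
    assert (Heq : ln (Rabs (f' (orbit f x n))) = Ssum f f' x (S n) - Ssum f f' x n)
      by (unfold Ssum; simpl; ring).
    rewrite Heq.
    pose proof (HC (S n)) as H1. pose proof (HC n) as H2.
    rewrite S_INR in H1.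
    apply Rabs_def2b in H1. apply Rabs_def2b in H2.
    assert (HnN : INR n + 1 <= INR N) by (rewrite <- S_INR; apply le_INR; lia).
    pose proof (pos_INR n). pose proof (Rle_abs lam). pose proof (Rle_abs (- lam)).
    rewrite Rabs_Ropp in H4.
    assert (d * INR n <= d * INR N) by (apply Rmult_le_compat_l; lra).
    replace ((INR n + 1) * lam) with (INR n * lam + lam) in H1 by ring.
    replace (d * (INR n + 1)) with (d * INR n + d) in H1 by ring.
    lra. }
  set (eta := / (INR N + 1)).
  assert (Heta : 0 < eta) by (apply Rinv_0_lt_compat; lra).
  set (r := / 2 ^ m).
  assert (Hr : r = exp (- (INR m * ln 2))) by (unfold r; rewrite exp_Ropp, pow2_exp; auto).
  assert (Hr0 : 0 < r) by (rewrite Hr; apply exp_pos).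
  assert (HC4 : 0 <= C4) by (unfold C4; lra).
  assert (Hcond1 : (2 * M + K + 1) * (r * Hh) <= eta * Lf).
  { fold C4. rewrite Hr, HHh. unfold eta, Lf.
    rewrite <- (exp_ln (C4 + 1)) at 1 by lra.
    rewrite <- (exp_ln (INR N + 1)) at 1 by lra.
    rewrite <- exp_Ropp, <- !exp_plus. apply exp_le'. fold lnN.
    assert (HX1' : X1 <= INR m * ln 2) by lra. unfold X1 in HX1'. lra. }
  set (tt := powerRZ 10 (- p)).
  assert (Htt : tt = exp tl) by (unfold tt, tl; rewrite powerRZ_Rpower by lra; reflexivity).
  assert (Htt1 : 0 < tt <= 1).
  { rewrite Htt. split; [apply exp_pos|]. rewrite <- exp_0. apply exp_le'.
    unfold tl. assert (IZR (- p) <= 0) by (apply IZR_le; lia).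
    assert (0 < ln 10) by (rewrite <- ln_1; apply ln_increasing; lra). nra. }
  set (mn := exp (- ((d * INR N + C3) * ln 2))).
  assert (Hmn : 0 < mn) by apply exp_pos.
  assert (Hcond2 : r * Hh <= tt * mn / 4).
  { rewrite Hr, HHh, Htt. unfold mn.
    assert (Heq : exp tl * exp (- ((d * INR N + C3) * ln 2)) / 4 =
                  exp (tl + - ((d * INR N + C3) * ln 2) + - ln 4)).
    { rewrite !exp_plus, (exp_Ropp (ln 4)), exp_ln by lra. field. }
    rewrite Heq, <- exp_plus. apply exp_le'.
    assert (HX2' : X2 <= INR m * ln 2) by lra. unfold X2 in HX2'. lra. }
  assert (Hmin_mn : mn <= orbit_min_abs f x N).
  { pose proof (min_abs_pos f x N (h_nz _ _ _ _ _ _ _ _ _ _ H)) as Hmp.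
    rewrite <- (exp_ln (orbit_min_abs f x N)) by auto. apply exp_le'.
    pose proof (HC3 N) as H3. rewrite Rmult_0_r, Rminus_0_r in H3.
    apply Rabs_def2b in H3. unfold ld in H3.
    assert (Hq : ln (orbit_min_abs f x N) = ln (orbit_min_abs f x N) / ln 2 * ln 2) by (field; lra).
    rewrite Hq. nra. }
  split.
  - intros n Hn.
    destruct (validity _ _ _ _ _ _ _ _ _ _ H m Hm n) as [He Hv].
    pose proof (invariant _ _ _ _ _ _ _ _ _ _ H m Hm N eta Lf Hh Heta HLf HLfn Hcond1
      (Gb_bound _ _ _ _ _ _ _ _ _ _ H N E HE HSS) n Hn) as Hinv.
    pose proof (Gb_bound _ _ _ _ _ _ _ _ _ _ H N E HE HSS n Hn) as HGb.
    fold eta Hh r in HGb, Hinv.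
    assert (HeH : ebar f Lbar rd m x n <= r * Hh).
    { eapply Rle_trans; [apply Hinv|]. apply Rmult_le_compat_l; lra. }
    assert (Hxn : mn <= Rabs (orbit f x n)) by (eapply Rle_trans; [apply Hmin_mn|apply min_abs_le; auto]).
    pose proof (Rabs_triang_inv (orbit f x n) (xhat f Lbar rd m x n)).
    fold tt.
    set (e := ebar f Lbar rd m x n) in *.
    set (xh := Rabs (xhat f Lbar rd m x n)) in *.
    assert (Hxh : mn - r * Hh <= xh) by lra.
    apply Rmult_le_reg_r with (1 + tt); [lra|].
    unfold Rdiv. replace (tt * / (1 + tt) * xh * (1 + tt)) with (tt * xh) by (field; lra).
    set (E0 := r * Hh) in *.
    assert (E0 >= 0) by (unfold E0; rewrite HHh; pose proof (exp_pos lnH); nra).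
    assert (e * (1 + tt) <= E0 * (1 + tt)) by (apply Rmult_le_compat_r; lra).
    assert (E0 * (1 + 2 * tt) <= tt * mn / 4 * (1 + 2 * tt)) by (apply Rmult_le_compat_r; lra).
    assert (tt * (mn - E0) <= tt * xh) by (apply Rmult_le_compat_l; lra).
    assert (tt * mn * tt <= tt * mn * 1) by (apply Rmult_le_compat_l; nra).
    nra.
  - assert (Hup : Rmax 0 (IZR (up (Rmax X1 X2 / ln 2))) <= 1 + Rmax 0 (Rmax X1 X2 / ln 2)).
    { apply Rmax_lub. pose proof (Rmax_l 0 (Rmax X1 X2 / ln 2)); lra.
      pose proof (Rmax_r 0 (Rmax X1 X2 / ln 2)); lra. }
    assert (HX : Rmax X1 X2 <= INR N * (mu + 6 * d) + K0).
    { apply Rmax_lub.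
      - unfold X1, lnH. pose proof (Rle_abs br1). pose proof (Rabs_pos br2).
        assert (0 <= d * INR N) by (apply Rmult_le_pos; lra).
        unfold K0, br1 in *. fold C4. lra.
      - unfold X2, lnH. pose proof (Rle_abs br2). pose proof (Rabs_pos br1).
        assert (0 <= d * INR N) by (apply Rmult_le_pos; lra).
        assert (d * INR N * ln 2 <= d * INR N).
        { rewrite <- (Rmult_1_r (d * INR N)) at 2. apply Rmult_le_compat_l; lra. }
        unfold K0, br2 in *. lra. }
    assert (HR : Rmax 0 (Rmax X1 X2 / ln 2) <= (INR N * (mu + 6 * d) + K0) / ln 2).
    { apply Rmax_lub.
      - unfold Rdiv. apply Rmult_le_pos; [|left; apply Rinv_0_lt_compat; lra].
        unfold K0. pose proof (Rabs_pos br1); pose proof (Rabs_pos br2).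
        assert (0 <= INR N * (mu + 6 * d)) by (apply Rmult_le_pos; lra). lra.
      - unfold Rdiv. apply Rmult_le_compat_r; [left; apply Rinv_0_lt_compat; lra|lra]. }
    unfold Rdiv in HR. lra.
Qed.

Lemma least_ex (P : nat -> Prop) m : P m -> exists m0, P m0 /\ forall k, (k < m0)%nat -> ~ P k.
Proof.
  revert m. induction m as [m IH] using lt_wf_ind. intros Hm.
  destruct (classic (exists k, (k < m)%nat /\ P k)) as [[k [Hk HPk]]|Hn].
  - apply (IH k Hk HPk).
  - exists m. split; auto. intros k Hk HPk. apply Hn. exists k; auto.
Qed.

Lemma mmin_ratio_spec f Lbar rd x N p m : (1 <= m)%nat -> prec_ok f Lbar rd x m N p ->
  exists mm, mmin_ratio f Lbar rd x N p = Finite (INR mm / INR N) /\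
    (1 <= mm)%nat /\ prec_ok f Lbar rd x mm N p /\ (mm <= m)%nat.
Proof.
  intros Hm Hok.
  destruct (least_ex (fun k => (1 <= k)%nat /\ prec_ok f Lbar rd x k N p) m (conj Hm Hok))
    as [m0 [[Hm01 Hm02] Hm03]].
  assert (Hex : exists m, is_mmin f Lbar rd x N p m).
  { exists m0. refine (conj Hm01 (conj Hm02 _)). intros k Hk Hok'. apply (Hm03 k); [lia|split; [lia|auto]]. }
  unfold mmin_ratio. destruct (excluded_middle_informative _) as [Hy|Hy]; [|contradiction].
  set (mm := epsilon _ _).
  assert (Hmm : is_mmin f Lbar rd x N p mm) by (apply epsilon_spec; auto).
  destruct Hmm as [Hmm1 [Hmm2 Hmm3]].
  exists mm. split; [reflexivity|]. split; auto. split; auto.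
  destruct (le_lt_dec mm m) as [Hle|Hlt]; auto.
  exfalso. apply (Hmm3 m); auto.
Qed.

Lemma ratio_cv a b f f' f'' Lbar M K rd x lam : Hyp a b f f' f'' Lbar M K rd x ->
  Un_cv (lyap_avg f f' x) lam ->
  Un_cv (fun N => ld (orbit_min_abs f x N) / INR N) 0 ->
  forall p : nat, cvF (fun N => mmin_ratio f Lbar rd x N (Z.of_nat p)) (/ ln 2 * Rmax 0 lam).
Proof.
  intros H Hlam Hmin p eps Heps.
  pose proof ln2_pos as Hl2.
  set (d := eps * ln 2 / 24).
  assert (Hd : 0 < d) by (unfold d; apply Rmult_lt_0_compat; [apply Rmult_lt_0_compat|]; lra).
  destruct (upper _ _ _ _ _ _ _ _ _ _ lam H Hlam Hmin (Z.of_nat p) d ltac:(lia) Hd) as [Aup HAup].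
  destruct (Hlam (eps * ln 2 / 2) ltac:(apply Rmult_lt_0_compat; [apply Rmult_lt_0_compat|]; lra))
    as [N1 HN1].
  set (Cx := ln (Rabs x) - ln 2 - ln (B0 a b)).
  set (T := Rabs Aup * 2 / eps + Rabs Cx * 2 / (eps * ln 2) + 1).
  exists (max (max N1 1) (Z.to_nat (up T))).
  intros N HN.
  assert (HN1' : (N1 <= N)%nat) by lia.
  assert (HNpos : (1 <= N)%nat) by lia.
  assert (HNr : 1 <= INR N) by (apply (le_INR 1); auto).
  assert (HT : T <= INR N).
  { destruct (archimed T) as [Ha _].
    assert (INR (Z.to_nat (up T)) <= INR N) by (apply le_INR; lia).
    assert (0 <= T).
    { unfold T. assert (0 <= Rabs Aup * 2 / eps).
      { unfold Rdiv. apply Rmult_le_pos; [pose proof (Rabs_pos Aup); lra|left; apply Rinv_0_lt_compat; lra]. }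
      assert (0 <= Rabs Cx * 2 / (eps * ln 2)).
      { unfold Rdiv. apply Rmult_le_pos; [pose proof (Rabs_pos Cx); lra|left; apply Rinv_0_lt_compat; nra]. }
      lra. }
    rewrite INR_IZR_INZ, Z2Nat.id in H0.
    - lra.
    - apply le_IZR. lra. }
  destruct (HAup N HNpos) as [m [Hm [Hok Hmb]]].
  destruct (mmin_ratio_spec f Lbar rd x N (Z.of_nat p) m Hm Hok) as [mm [Heq [Hmm1 [Hmm2 Hmm3]]]].
  exists (INR mm / INR N). split; [auto|].
  pose proof (lower_bound _ _ _ _ _ _ _ _ _ _ H mm N (Z.of_nat p) Hmm1 Hmm2) as Hlow.
  fold Cx in Hlow.
  assert (Hmmm : INR mm <= INR m) by (apply le_INR; auto).
  assert (Hmm0 : 1 <= INR mm) by (apply (le_INR 1); auto).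
  specialize (HN1 N HN1'). unfold R_dist, lyap_avg in HN1. fold (Ssum f f' x N) in HN1.
  apply Rabs_def2 in HN1. destruct HN1 as [HN1a HN1b].
  set (S := Ssum f f' x N) in *.
  set (mu := Rmax 0 lam) in *.
  pose proof (Rmax_l 0 lam) as Hmu0. pose proof (Rmax_r 0 lam) as Hmul. fold mu in Hmu0, Hmul.
  assert (HNp : 0 < INR N) by lra.
  assert (Hq : INR mm = INR mm / INR N * INR N) by (field; lra).
  set (q := INR mm / INR N) in *.
  assert (HS : S = S / INR N * INR N) by (field; lra).
  set (s := S / INR N) in *.
  assert (Hup : q * ln 2 < mu + eps * ln 2).
  { assert (Hb : INR mm <= INR N * (mu + 6 * d) / ln 2 + Rabs Aup) by (pose proof (Rle_abs Aup); lra).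
    assert (Hb2 : INR mm * ln 2 <= INR N * (mu + 6 * d) + Rabs Aup * ln 2).
    { apply Rmult_le_compat_r with (r := ln 2) in Hb; [|lra].
      unfold Rdiv in Hb. rewrite Rmult_plus_distr_r, Rmult_assoc, Rinv_l in Hb by lra. lra. }
    rewrite Hq in Hb2.
    assert (HA : Rabs Aup * 2 / eps <= INR N).
    { unfold T in HT. assert (0 <= Rabs Cx * 2 / (eps * ln 2)).
      { unfold Rdiv. apply Rmult_le_pos; [pose proof (Rabs_pos Cx); lra|left; apply Rinv_0_lt_compat; nra]. }
      lra. }
    assert (HA2 : Rabs Aup * 2 <= INR N * eps).
    { apply Rmult_le_compat_r with (r := eps) in HA; [|lra].
      unfold Rdiv in HA. rewrite Rmult_assoc, Rinv_l in HA by lra. lra. }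
    assert (Hfin : q * ln 2 * INR N < (mu + eps * ln 2) * INR N).
    { unfold d in Hb2.
      assert (Rabs Aup * ln 2 <= INR N * eps * ln 2 / 2).
      { apply Rmult_le_compat_r with (r := ln 2) in HA2; lra. }
      assert (0 < INR N * eps * ln 2) by (apply Rmult_lt_0_compat; [apply Rmult_lt_0_compat|]; lra).
      lra. }
    apply Rmult_lt_reg_r with (INR N); lra. }
  assert (Hlo : mu - eps * ln 2 < q * ln 2).
  { assert (Hq0 : 0 < q) by (unfold q; apply Rdiv_lt_0_compat; lra).
    destruct (Rle_lt_dec 0 lam) as [Hl|Hl].
    - assert (Hmu : mu = lam) by (unfold mu; apply Rmax_right; auto). rewrite Hmu.
      rewrite HS, Hq in Hlow.
      assert (HC : Rabs Cx * 2 / (eps * ln 2) <= INR N).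
      { unfold T in HT. assert (0 <= Rabs Aup * 2 / eps).
        { unfold Rdiv. apply Rmult_le_pos; [pose proof (Rabs_pos Aup); lra|left; apply Rinv_0_lt_compat; lra]. }
        lra. }
      assert (HC2 : Rabs Cx * 2 <= INR N * (eps * ln 2)).
      { apply Rmult_le_compat_r with (r := eps * ln 2) in HC; [|nra].
        unfold Rdiv in HC. rewrite Rmult_assoc, Rinv_l in HC by nra. lra. }
      pose proof (Rle_abs (- Cx)). rewrite Rabs_Ropp in H0.
      assert (0 < (s - (lam - eps * ln 2 / 2)) * INR N) by (apply Rmult_lt_0_compat; lra).
      assert (HCx : Cx = ln (Rabs x) - ln 2 - ln (B0 a b)) by reflexivity.
      assert (Hfin : (lam - eps * ln 2) * INR N < q * ln 2 * INR N) by lra.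
      apply Rmult_lt_reg_r with (INR N); lra.
    - assert (Hmu : mu = 0) by (unfold mu; apply Rmax_left; lra). rewrite Hmu.
      assert (0 < q * ln 2) by (apply Rmult_lt_0_compat; lra).
      assert (0 < eps * ln 2) by (apply Rmult_lt_0_compat; lra). lra. }
  assert (HA' : / ln 2 * mu = mu / ln 2) by (unfold Rdiv; ring).
  fold mu. rewrite HA'.
  apply Rabs_def1.
  - apply Rmult_lt_reg_r with (ln 2); [lra|].
    unfold Rdiv. rewrite Rmult_minus_distr_r, Rmult_assoc, Rinv_l by lra. lra.
  - apply Rmult_lt_reg_r with (ln 2); [lra|].
    unfold Rdiv. rewrite Rmult_minus_distr_r, Rmult_assoc, Rinv_l by lra. lra.
Qed.

Lemma limsup_ge (w v : nat -> R) lam : Un_cv v lam -> (forall n, v n <= w n) ->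
  Rbar_le (Finite lam) (Rbar_limsup (fun n => Finite (w n))).
Proof.
  intros Hv Hvw. unfold Rbar_limsup.
  apply (proj2 (Rbar_glb_spec _)).
  intros z [N ->]. apply Rbar_ge_eps. intros eps He.
  destruct (Hv eps He) as [P HP].
  specialize (HP (max N P) ltac:(lia)). unfold R_dist in HP. apply Rabs_def2 in HP.
  eapply Rbar_le_trans; [|apply (proj1 (Rbar_lub_spec _)); exists (max N P); split; [lia|reflexivity]].
  simpl. specialize (Hvw (max N P)). lra.
Qed.

Lemma psum_le g h n : (forall k, g k <= h k) -> psum g n <= psum h n.
Proof. intros H; induction n; simpl. lra. specialize (H n). lra. Qed.

Lemma lambar_ge f f' x lam lambar : (forall k, f' (orbit f x k) <> 0) ->
  Un_cv (lyap_avg f f' x) lam -> Rbar_lim_0plus (lyap_bar_alpha f f' x) lambar ->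
  lam <= lambar.
Proof.
  intros Hnz Hlam Hbar.
  apply Rnot_lt_le. intros Hlt.
  destruct (Hbar ((lam - lambar)/2) ltac:(lra)) as [del [Hdel Hd]].
  destruct (Hd (del / 2) ltac:(lra)) as [r [Hr1 Hr2]].
  assert (Hge : Rbar_le (Finite lam) (lyap_bar_alpha f f' x (del / 2))).
  { unfold lyap_bar_alpha. apply limsup_ge with (v := lyap_avg f f' x); auto.
    intros n. unfold lyap_avg. unfold Rdiv.
    assert (0 <= / INR n).
    { destruct n. simpl. rewrite Rinv_0; lra. left; apply Rinv_0_lt_compat, lt_0_INR; lia. }
    apply Rmult_le_compat_r; auto. apply psum_le. intros k.
    unfold eta. destruct (Rle_dec _ _); [apply Rle_refl|].
    left; apply ln_increasing; [apply Rabs_pos_lt; auto|lra]. }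
  rewrite Hr1 in Hge. simpl in Hge. apply Rabs_def2 in Hr2. lra.
Qed.

Lemma cvF_const A : cvF (fun _ => Finite A) A.
Proof. intros eps He. exists 0%nat. intros p _. exists A. split; auto. rewrite Rminus_diag, Rabs_R0; lra. Qed.

Theorem mainTheorem11
  (a b : R) (f f' f'' : R -> R) (Lbar : R -> R -> R) (Lmax K : R)
  (rd : nat -> R -> R) (q : Q) (lam lambar : R) :
  a < b ->
  (forall y, inD a b y -> inD a b (f y)) ->
  (forall y, inD a b y -> derivable_pt_lim f y (f' y)) ->
  (forall y, inD a b y -> derivable_pt_lim f' y (f'' y)) ->
  (forall y, inD a b y -> continuity_pt f'' y) ->
  (exists M, forall y, inD a b y -> Rabs (f'' y) <= M) ->
  0 <= Lmax -> 0 <= K ->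
  (forall c e l, inD a b c -> 0 <= e -> is_lub (L_set a b f' c e) l ->
     l <= Lbar c e /\ Lbar c e <= Rmin Lmax (l + K * e)) ->
  is_round_nearest rd ->
  inD a b (Q2R q) ->
  (forall m n, (1 <= m)%nat -> inD a b (xhat f Lbar rd m (Q2R q) n)) ->
  (forall n, orbit f (Q2R q) n <> 0) ->
  Un_cv (fun N => ld (orbit_min_abs f (Q2R q) N) / INR N) 0 ->
  (forall k, f' (orbit f (Q2R q) k) <> 0) ->
  Un_cv (lyap_avg f f' (Q2R q)) lam ->
  Rbar_lim_0plus (lyap_bar_alpha f f' (Q2R q)) lambar ->
  let sig := fun p : nat => sigma_rate f Lbar rd (Q2R q) (Z.of_nat p) in
  Rbar_le (Finite (/ ln 2 * Rmax 0 lam)) (Rbar_liminf sig) /\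
  Rbar_le (Rbar_liminf sig) (Rbar_limsup sig) /\
  Rbar_le (Rbar_limsup sig) (Finite (/ ln 2 * Rmax 0 lambar)) /\
  (forall s, Rbar_cv sig s ->
     Rbar_le (Finite (/ ln 2 * Rmax 0 lam)) s /\
     Rbar_le s (Finite (/ ln 2 * Rmax 0 lambar))) /\
  (lambar = lam -> Rbar_cv sig (Finite (/ ln 2 * Rmax 0 lam))).
Proof.
  intros Hab HfD Hf' Hf'' _ [M HM] HLmax HK HLbar Hrd Hx Hxh Hnz Hmin Hf'nz Hlam Hbar sig.
  assert (H : Hyp a b f f' f'' Lbar M K rd (Q2R q)).
  { constructor; auto.
    intros c e l Hc He Hl. destruct (HLbar c e l Hc He Hl) as [H1 H2].
    split; auto. eapply Rle_trans; [apply H2|apply Rmin_r]. }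
  set (A := / ln 2 * Rmax 0 lam).
  assert (Hsig : forall p, sig p = Finite A).
  { intros p. unfold sig, sigma_rate. apply limsup_cv.
    apply (ratio_cv _ _ _ _ _ _ _ _ _ _ lam H Hlam Hmin p). }
  assert (Hsig' : sig = fun _ => Finite A) by (apply functional_extensionality; auto).
  assert (Hll : lam <= lambar) by (apply (lambar_ge f f' (Q2R q)); auto).
  assert (HAB : A <= / ln 2 * Rmax 0 lambar).
  { unfold A. apply Rmult_le_compat_l.
    - left; apply Rinv_0_lt_compat, ln2_pos.
    - apply Rmax_lub; [apply Rmax_l|]. eapply Rle_trans; [apply Hll|apply Rmax_r]. }
  assert (Hli : Rbar_liminf sig = Finite A) by (rewrite Hsig'; apply liminf_cv, cvF_const).
  assert (Hls : Rbar_limsup sig = Finite A) by (rewrite Hsig'; apply limsup_cv, cvF_const).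
  rewrite Hli, Hls. fold A.
  split; [simpl; lra|]. split; [simpl; lra|]. split; [simpl; lra|]. split.
  - intros s Hs. destruct s; simpl in *.
    + assert (r = A).
      { apply Rle_antisym; apply Rnot_lt_le; intros Hlt.
        - destruct (Hs ((r - A)/2) ltac:(lra)) as [P HP]. destruct (HP P (Nat.le_refl P)) as [r' [H1 H2]].
          rewrite Hsig in H1. inversion H1; subst. apply Rabs_def2 in H2. lra.
        - destruct (Hs ((A - r)/2) ltac:(lra)) as [P HP]. destruct (HP P (Nat.le_refl P)) as [r' [H1 H2]].
          rewrite Hsig in H1. inversion H1; subst. apply Rabs_def2 in H2. lra. }
      subst; lra.
    + destruct (Hs (A + 1)) as [P HP]. specialize (HP P (Nat.le_refl P)). rewrite Hsig in HP. simpl in HP. lra.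
    + destruct (Hs (A - 1)) as [P HP]. specialize (HP P (Nat.le_refl P)). rewrite Hsig in HP. simpl in HP. lra.
  - intros _. simpl. intros eps He. exists 0%nat. intros p _. exists A. rewrite Hsig.
    split; auto. rewrite Rminus_diag, Rabs_R0; lra.
Qed.
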